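(* Let $H$ be a red-blue colouring of $K_n$ satisfying $\mathrm{pack}(H) \le n^2/4$. Let $\{X_1, X_2\}$ be a partition of $V(H)$ with at most $(n-2)/6$ blue edges having both ends in $X_1$ or both ends in $X_2$. Then $n/2 - \sqrt{n} \le |X_i| \le n/2 + \sqrt{n}$ for $i \in [2]$.
   Context: A red-blue colouring $H$ of $K_n$ assigns red or blue to each edge of the complete graph on the $n$-vertex set $V(H)$; $H_R, H_B$ are the spanning subgraphs of red and blue edges. For a graph $F$, a fractional triangle packing is a function $\omega$ from the triangles of $F$ to $[0,1]$ with $\sum_{T \ni e}\omega(T) \le 1$ for every edge $e$; $\nu^*(F)$ is the maximum of $\sum_T\omega(T)$; $\mathrm{pack}(H) = 3(\nu^*(H_R)+\nu^*(H_B))$. *)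

(* Defs.v *)
From HB Require Import structures.
From mathcomp Require Import all_boot all_order all_algebra.
From mathcomp Require Import all_classical all_reals.
Set Implicit Arguments. Unset Strict Implicit. Unset Printing Implicit Defensive.
Import Order.TTheory GRing.Theory Num.Theory.
Local Open Scope ring_scope.


Section Defs.
Variable T : finType.

(* A red-blue colouring of the complete graph on vertex set T assigns to each
   2-subset {x,y} (x <> y) a colour: [col e = true] means red, false means blue.
   Values of [col] on sets that are not of size 2 are irrelevant. *)

Definition red_graph (col : {set T} -> bool) : rel T :=
  fun x y => (x != y) && col ([set x; y])%SET.
Definition blue_graph (col : {set T} -> bool) : rel T :=
  fun x y => (x != y) && ~~ col ([set x; y])%SET.

Definition is_clique (G : rel T) (A : {set T}) : bool :=
  [forall x in A, forall y in A, (x != y) ==> G x y].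

Definition is_edge (G : rel T) (e : {set T}) : bool := (#|e| == 2)%N && is_clique G e.
Definition is_triangle (G : rel T) (t : {set T}) : bool := (#|t| == 3)%N && is_clique G t.

Variable R : realType.

Definition frac_triangle_packing (G : rel T) (w : {set T} -> R) : Prop :=
  (forall t, is_triangle G t -> 0 <= w t <= 1) /\
  (forall e, is_edge G e -> \sum_(t | is_triangle G t && (e \subset t)) w t <= 1).

Definition packing_value (G : rel T) (w : {set T} -> R) : R :=
  \sum_(t | is_triangle G t) w t.

Definition nu_star (G : rel T) : R :=
  sup ([set s : R | exists w, frac_triangle_packing G w /\ s = packing_value G w])%classic.

Definition pack (col : {set T} -> bool) : R :=
  3 * (nu_star (red_graph col) + nu_star (blue_graph col)).

Definition blue_inside (col : {set T} -> bool) (X1 X2 : {set T}) : nat :=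
  #|[set e : {set T} | is_edge (blue_graph col) e && ((e \subset X1) || (e \subset X2))]|.

End Defs.

(* Main.v *)
Require Import Defs.
From HB Require Import structures.
From mathcomp Require Import all_boot all_order all_algebra.
From mathcomp Require Import all_classical all_reals.
From mathcomp Require Import fintype finset bigop.
From mathcomp Require Import lra zify.
Import Order.TTheory GRing.Theory Num.Theory.
Set Implicit Arguments. Unset Strict Implicit. Unset Printing Implicit Defensive.

Lemma count_ext (T : finType) (A e : {set T}) :
  #|e| = 2 -> e \subset A ->
  #|[set t : {set T} | (#|t| == 3) && (e \subset t) && (t \subset A)]| <= #|A| - 2.
Proof.
move=> ce eA.
have -> : #|A| - 2 = #|A :\: e| by rewrite cardsD (setIidPr eA) ce.
apply: leq_trans (leq_imset_card (fun z => z |: e) _).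
apply: subset_leq_card; apply/subsetP => t; rewrite inE => /andP[/andP[ct et] tA].
have : 0 < #|t :\: e| by rewrite cardsD (setIidPr et) ce (eqP ct).
case/card_gt0P => z; rewrite inE => /andP[ze zt].
apply/imsetP; exists z; first by rewrite inE ze (subsetP tA).
apply/eqP; rewrite eq_sym eqEcard subUset sub1set zt et /= (eqP ct).
by rewrite cardsU1 ze ce.
Qed.

Lemma nonred_blue (T : finType) (col : {set T} -> bool) (t : {set T}) :
  #|t| = 3 -> ~~ is_triangle (red_graph col) t ->
  exists e, is_edge (blue_graph col) e && (e \subset t).
Proof.
move=> ct; rewrite /is_triangle ct eqxx /= /is_clique.
case/forallPn => x; rewrite negb_imply => /andP[xt].
case/forallPn => y; rewrite negb_imply => /andP[yt].
rewrite negb_imply => /andP[xy]; rewrite /red_graph xy /= => ncol.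
exists [set x; y]; rewrite /is_edge cards2 xy /= subUset !sub1set xt yt !andbT /is_clique.
apply/forallP => u; apply/implyP => /set2P hu.
apply/forallP => v; apply/implyP => /set2P hv; apply/implyP => uv.
rewrite /blue_graph uv /=.
by case: hu hv uv => -> [] -> //; rewrite ?eqxx // setUC.
Qed.

Lemma red_count (T : finType) (col : {set T} -> bool) (A : {set T}) :
  'C(#|A|, 3) <= #|[set t | is_triangle (red_graph col) t && (t \subset A)]|
     + #|[set e | is_edge (blue_graph col) e && (e \subset A)]| * (#|A| - 2).
Proof.
set Red := [set t | _ && _]; set BlA := [set e | _ && _].
set D := [set t : {set T} | t \subset A & #|t| == 3].
rewrite -cards_draws -/D -(cardsID Red D).
apply: leq_add; first by apply: subset_leq_card; apply: subsetIr.
rewrite -sum1_card.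
apply: (@leq_trans (\sum_(t in D :\: Red) \sum_(e in BlA) (e \subset t : nat))).
  apply: leq_sum => t; rewrite !inE => /andP[ntR /andP[tA ct]].
  have nt : ~~ is_triangle (red_graph col) t by move: ntR; rewrite tA andbT.
  have [e /andP[be et]] := nonred_blue (eqP ct) nt.
  have eB : e \in BlA by rewrite inE be (subset_trans et tA).
  by rewrite (bigD1 e) //= et.
rewrite exchange_big /= -sum_nat_const.
apply: leq_sum => e; rewrite inE => /andP[be eA].
have ce : #|e| = 2 by move: be => /andP[/eqP].
rewrite -big_mkcondr /= sum1_card.
apply: leq_trans (count_ext ce eA).
apply: subset_leq_card; apply/subsetP => t; rewrite !inE.
rewrite unfold_in !inE; case/andP => /andP[_ /andP[tA ->]] ->; by rewrite tA.
Qed.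
Local Open Scope ring_scope.

Lemma nu_ge (R : realType) (T : finType) (G : rel T) (w : {set T} -> R) :
  frac_triangle_packing G w -> packing_value G w <= nu_star R G.
Proof.
move=> hw; apply: sup_upper_bound; last by exists w.
split; first by exists (packing_value G w), w.
exists (\sum_(t | is_triangle G t) (1 : R)) => _ [w' [[h1 _] ->]].
by apply: ler_sum => t /h1 /andP[].
Qed.

Lemma nu_ge0 (R : realType) (T : finType) (G : rel T) : 0 <= nu_star R G.
Proof.
have -> : (0 : R) = packing_value G (fun _ => 0) by rewrite /packing_value big1.
apply: nu_ge; split => [t _|e _]; first by rewrite lexx ler01.
by rewrite big1.
Qed.

Lemma sum_ind (R : realType) (T : finType) (P Q : pred T) :
  \sum_(t | P t) ((Q t)%:R : R) = #|[set t | P t && Q t]|%:R.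
Proof.
rewrite (eq_bigr (fun t => if Q t then 1 else 0)); last by move=> t _; case: (Q t).
rewrite -big_mkcondr /= sumr_const; congr (_ *+ _).
by apply: eq_card => t; rewrite inE.
Qed.
Lemma bin3 (a : nat) : ('C(a,3) * 6 = a * (a-1) * (a-2))%N.
Proof.
have := bin_ffact a 3; rewrite !ffactnS ffactn0 /= => ->.
rewrite -!subn1 muln1 mulnA; congr (_ * _ * _); lia.
Qed.

Lemma contrib (R : realType) (a r k : nat) : ('C(a,3) <= r + k*(a-2))%N -> (2 < a)%N ->
  (a%:R*(a%:R-1))/2 - 3*k%:R <= 3 * (((a-2)%:R)^-1 * r%:R) :> R.
Proof.
move=> hC ha.
have h6 : ('C(a,3)%:R * 6 = a%:R * (a%:R - 1) * (a%:R - 2) :> R).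
  by rewrite -(natrB _ (ltnW (ltnW ha))) -natrB ?(ltnW ha) // -!natrM bin3.
have hC' : ('C(a,3)%:R <= r%:R + k%:R * (a%:R - 2) :> R).
  by rewrite -(natrB _ (ltnW ha)) -natrM -natrD ler_nat.
have hd : (0 < a%:R - 2 :> R) by rewrite -(natrB _ (ltnW ha)) ltr0n subn_gt0.
rewrite natrB ?(ltnW ha) //.
set d := (a%:R - 2 : R) in hC' hd h6 *.
set y := d^-1 * r%:R.
have hy : r%:R = y * d by rewrite /y mulrC mulrA mulfV ?mul1r // gt_eqF.
rewrite hy in hC'.
nra.
Qed.

Definition cw (R : realType) (T : finType) (A : {set T}) : R := ((#|A| - 2)%N%:R)^-1.

Lemma cw_ge0 R (T : finType) (A : {set T}) : 0 <= cw R A.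
Proof. by rewrite /cw invr_ge0. Qed.

Lemma cw_mul R (T : finType) (A : {set T}) : cw R A * (#|A| - 2)%N%:R <= 1.
Proof.
rewrite /cw; case: (posnP (#|A| - 2)) => [->|h]; first by rewrite invr0 mul0r ler01.
by rewrite mulVf // pnatr_eq0 -lt0n.
Qed.

Lemma cw_le1 R (T : finType) (A : {set T}) : cw R A <= 1.
Proof.
rewrite /cw; case: (posnP (#|A| - 2)) => [->|h]; first by rewrite invr0 ler01.
by rewrite invf_le1 ?ltr0n // ler1n.
Qed.

Lemma edge_bound R (T : finType) (A e : {set T}) : #|e| = 2 ->
  cw R A * #|[set t : {set T} | (#|t| == 3)%N && (e \subset t) && (t \subset A)]|%:R
    <= (e \subset A)%:R.
Proof.
move=> ce; case eA: (e \subset A).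
  apply: le_trans (cw_mul R A); apply: ler_wpM2l; first exact: cw_ge0.
  by rewrite ler_nat count_ext.
rewrite (_ : #|_| = 0%N) ?mulr0 //; apply: eq_card0 => t; rewrite inE.
apply/negP => /andP[/andP[_ et] tA]; by rewrite (subset_trans et tA) in eA.
Qed.

Definition wred (R : realType) (T : finType) (X1 X2 : {set T}) (t : {set T}) : R :=
  cw R X1 * (t \subset X1)%:R + cw R X2 * (t \subset X2)%:R.

Lemma wred_packing R (T : finType) col (X1 X2 : {set T}) :
  X1 :&: X2 = set0 ->
  frac_triangle_packing (red_graph col) (wred R X1 X2).
Proof.
move=> hI.
have both (s : {set T}) : s \subset X1 -> s \subset X2 -> s = set0.
  by move=> h1 h2; apply/eqP; rewrite -subset0 -hI subsetI h1 h2.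
split.
  move=> t /andP[/eqP ct _]; rewrite /wred.
  case h1: (t \subset X1); case h2: (t \subset X2).
  - by move: ct; rewrite (both _ h1 h2) cards0.
  - by rewrite mulr1 mulr0 addr0 cw_ge0 cw_le1.
  - by rewrite mulr1 mulr0 add0r cw_ge0 cw_le1.
  - by rewrite !mulr0 addr0 lexx ler01.
move=> e /andP[/eqP ce _].
have H : \sum_(t : {set T} | is_triangle (red_graph col) t && (e \subset t)) wred R X1 X2 t <= \sum_(t : {set T} | (#|t| == 3)%N && (e \subset t)) wred R X1 X2 t.
  rewrite [X in X <= _]big_mkcond [X in _ <= X]big_mkcond /=.
  apply: ler_sum => t _.
  case ht: (is_triangle _ t); case: (e \subset t) => //=.
  - by move: ht => /andP[-> _].
  - by rewrite andbF.
  - case: (_ == _) => //; rewrite /wred addr_ge0 // mulr_ge0 ?cw_ge0 //.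
  - by rewrite andbF.
apply: le_trans H _.
rewrite /wred big_split /= -!mulr_sumr !sum_ind.
apply: le_trans (lerD (edge_bound R X1 ce) (edge_bound R X2 ce)) _.
case h1: (e \subset X1); case h2: (e \subset X2) => //=; rewrite ?addr0 ?add0r //.
by move: ce; rewrite (both _ h1 h2) cards0.
Qed.
Lemma final (R : realType) (a b : nat) (K1 K2 U1 U2 p : R) :
  (0 < a)%N -> (0 < b)%N -> 0 <= K1 -> 0 <= K2 ->
  K1 + K2 <= ((a + b)%N%:R - 2) / 6 ->
  0 <= U1 -> 0 <= U2 ->
  ((2 < a)%N -> a%:R * (a%:R - 1) / 2 - 3 * K1 <= U1) ->
  ((2 < b)%N -> b%:R * (b%:R - 1) / 2 - 3 * K2 <= U2) ->
  U1 + U2 <= p -> p <= (a + b)%N%:R ^+ 2 / 4 ->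
  (a%:R - (a + b)%N%:R / 2) ^+ 2 <= (a + b)%N%:R :> R.
Proof.
move=> a0 b0 k1 k2 hk u1 u2 ha hb hp hn.
rewrite natrD in hk hn *.
have hx : (2 < a)%N -> (2 : R) < a%:R by rewrite ltr_nat.
have hy : (2 < b)%N -> (2 : R) < b%:R by rewrite ltr_nat.
case: (boolP (2 < a)%N) => a2; case: (boolP (2 < b)%N) => b2.
- have h1 := ha a2; have h2 := hb b2; have h3 := hx a2; have h4 := hy b2.
  nra.
- have h1 := ha a2; have h3 := hx a2.
  (have [eb|eb] : b = 1%N \/ b = 2%N by lia); rewrite eb in hk hn *; nra.
- have h2 := hb b2; have h4 := hy b2.
  (have [ea|ea] : a = 1%N \/ a = 2%N by lia); rewrite ea in hk hn *; nra.
- have [->|->] : a = 1%N \/ a = 2%N by lia.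
  all: have [->|->] : b = 1%N \/ b = 2%N by lia.
  all: nra.
Qed.

Theorem proposition6p3 (R : realType) (T : finType) (col : {set T} -> bool)
  (X1 X2 : {set T}) :
  let n : R := #|T|%:R in
  pack R col <= n ^+ 2 / 4 ->
  (X1 != finset.set0)%SET -> (X2 != finset.set0)%SET -> (X1 :&: X2 = finset.set0)%SET -> (X1 :|: X2 = finset.setT)%SET ->
  (blue_inside col X1 X2)%:R <= (n - 2) / 6 ->
  (n / 2 - Num.sqrt n <= #|X1|%:R <= n / 2 + Num.sqrt n) /\
  (n / 2 - Num.sqrt n <= #|X2|%:R <= n / 2 + Num.sqrt n).
Proof.
move=> n hpack h1 h2 hI hU hk.
have hn : #|T| = (#|X1| + #|X2|)%N.
  by rewrite -cardsT -hU cardsU hI cards0 subn0.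
set BlA := fun A : {set T} => [set e | is_edge (blue_graph col) e && (e \subset A)].
have hk12 : blue_inside col X1 X2 = (#|BlA X1| + #|BlA X2|)%N.
  rewrite /blue_inside.
  have -> : [set e | is_edge (blue_graph col) e && ((e \subset X1) || (e \subset X2))]
     = BlA X1 :|: BlA X2.
    by apply/setP => e; rewrite !inE andb_orr.
  rewrite cardsU.
  have -> : BlA X1 :&: BlA X2 = set0.
    apply/setP => e; rewrite !inE.
    apply/negP => /andP[/andP[/andP[/eqP ce _] e1] /andP[_ e2]].
    have : e \subset X1 :&: X2 by rewrite subsetI e1 e2.
    by rewrite hI subset0 => /eqP ee; rewrite ee cards0 in ce.
  by rewrite cards0 subn0.
set Red := fun A : {set T} => [set t | is_triangle (red_graph col) t && (t \subset A)].
have hval : packing_value (red_graph col) (wred R X1 X2) =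
   cw R X1 * #|Red X1|%:R + cw R X2 * #|Red X2|%:R.
  by rewrite /packing_value /wred big_split -!mulr_sumr !sum_ind.
have hp : 3 * (cw R X1 * #|Red X1|%:R) + 3 * (cw R X2 * #|Red X2|%:R) <= pack R col.
  rewrite /pack -mulrDr ler_pM2l // -hval.
  apply: le_trans (nu_ge (wred_packing R col hI)) _.
  by rewrite lerDl nu_ge0.
have hU1 : (2 < #|X1|)%N -> #|X1|%:R * (#|X1|%:R - 1) / 2 - 3 * (#|BlA X1|%:R) <=
     3 * (cw R X1 * #|Red X1|%:R) :> R.
  by move=> ha; apply: contrib => //; apply: red_count.
have hU2 : (2 < #|X2|)%N -> #|X2|%:R * (#|X2|%:R - 1) / 2 - 3 * (#|BlA X2|%:R) <=
     3 * (cw R X2 * #|Red X2|%:R) :> R.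
  by move=> ha; apply: contrib => //; apply: red_count.
have a0 : (0 < #|X1|)%N by rewrite card_gt0.
have b0 : (0 < #|X2|)%N by rewrite card_gt0.
rewrite /n hn natrD in hpack hk; rewrite hk12 natrD in hk.
have u1 : 0 <= 3 * (cw R X1 * #|Red X1|%:R) by rewrite mulr_ge0 // mulr_ge0 ?cw_ge0.
have u2 : 0 <= 3 * (cw R X2 * #|Red X2|%:R) by rewrite mulr_ge0 // mulr_ge0 ?cw_ge0.
have hk' : #|BlA X1|%:R + #|BlA X2|%:R <= ((#|X1| + #|X2|)%N%:R - 2) / 6 :> R by rewrite natrD.
have hpack' : pack R col <= (#|X1| + #|X2|)%N%:R ^+ 2 / 4 by rewrite natrD.
have key := final a0 b0 (ler0n _ _) (ler0n _ _) hk' u1 u2 hU1 hU2 (le_trans hp hpack').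
rewrite natrD in key.
have hs : `|#|X1|%:R - n / 2| <= Num.sqrt n.
  rewrite -sqrtr_sqr; apply: ler_wsqrtr; rewrite /n hn natrD; exact: key (lexx _).
rewrite /n hn natrD in hs *.
move: hs; rewrite ler_norml => /andP[hl hr].
split; apply/andP; split; lra.
Qed.
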